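(* An object $(V,f,h)$ of $\mathcal R(P,I)$ is simple if and only if $f:P\to V$ is surjective and $h:V\to I$ is injective.
   Context: Let $\tilde Q$ be a finite acyclic quiver, $P$ a fixed projective representation and $I$ a fixed injective representation of $\tilde Q$ over $\mathbb C$ (finite-dimensional). The category $\mathcal R(P,I)$ has as objects triples $(V,f,h)$ with $V$ a finite-dimensional representation of $\tilde Q$, $f:P\to V$ and $h:V\to I$ morphisms of representations; a morphism $(V,f,h)\to(V',f',h')$ is a morphism of representations $g:V\to V'$ with $g\circ f=f'$ and $h'\circ g=h$. An object $(V,f,h)$ is called simple if there is no monomorphism $(V',f',h')\to(V,f,h)$ in $\mathcal R(P,I)$ that is not an isomorphism and no epimorphism $(V,f,h)\to(V'',f'',h'')$ in $\mathcal R(P,I)$ that is not an isomorphism. *)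

(* Defs.v *)
(* Representations of quivers over a field F,
   with vector spaces F^d (row vectors) and linear maps as matrices acting on the right. *)
From HB Require Import structures.
From mathcomp Require Import all_boot all_order all_algebra.
From mathcomp Require Import reals complex.
Set Implicit Arguments. Unset Strict Implicit. Unset Printing Implicit Defensive.
Import GRing.Theory.
Local Open Scope ring_scope.

Record quiver := Quiver {
  vert : finType;
  arr  : finType;
  src  : arr -> vert;
  tgt  : arr -> vert }.

Definition acyclic (Q : quiver) : Prop :=
  forall (a : arr Q) (s : seq (arr Q)),
    path (fun x y => tgt x == src y) a s -> tgt (last a s) != src a.

Record rep (F : fieldType) (Q : quiver) := Rep {
  rdim : vert Q -> nat;
  rmap : forall a : arr Q, 'M[F]_(rdim (src a), rdim (tgt a)) }.

Definition homfam (F : fieldType) (Q : quiver) (V W : rep F Q) :=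
  forall i : vert Q, 'M[F]_(rdim V i, rdim W i).

Definition is_hom (F : fieldType) (Q : quiver) (V W : rep F Q) (g : homfam V W) : Prop :=
  forall a : arr Q, rmap V a *m g (tgt a) = g (src a) *m rmap W a.

(* composition "first g, then h" *)
Definition hcomp (F : fieldType) (Q : quiver) (U V W : rep F Q)
  (g : homfam U V) (h : homfam V W) : homfam U W := fun i => g i *m h i.

Definition hid (F : fieldType) (Q : quiver) (V : rep F Q) : homfam V V :=
  fun i => 1%:M.

Definition heq (F : fieldType) (Q : quiver) (V W : rep F Q) (g h : homfam V W) : Prop :=
  forall i, g i = h i.

Definition rep_epi (F : fieldType) (Q : quiver) (V W : rep F Q) (e : homfam V W) : Prop :=
  is_hom e /\
  forall (U : rep F Q) (u v : homfam W U), is_hom u -> is_hom v ->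
    heq (hcomp e u) (hcomp e v) -> heq u v.

Definition rep_mono (F : fieldType) (Q : quiver) (V W : rep F Q) (m : homfam V W) : Prop :=
  is_hom m /\
  forall (U : rep F Q) (u v : homfam U V), is_hom u -> is_hom v ->
    heq (hcomp u m) (hcomp v m) -> heq u v.

Definition rep_projective (F : fieldType) (Q : quiver) (P : rep F Q) : Prop :=
  forall (V W : rep F Q) (e : homfam V W) (p : homfam P W),
    rep_epi e -> is_hom p -> exists l : homfam P V, is_hom l /\ heq (hcomp l e) p.

Definition rep_injective (F : fieldType) (Q : quiver) (I : rep F Q) : Prop :=
  forall (V W : rep F Q) (m : homfam V W) (p : homfam V I),
    rep_mono m -> is_hom p -> exists l : homfam W I, is_hom l /\ heq (hcomp m l) p.

Record robj (F : fieldType) (Q : quiver) (P I : rep F Q) := RObj {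
  oV : rep F Q;
  of_ : homfam P oV;
  oh : homfam oV I;
  of_hom : is_hom of_;
  oh_hom : is_hom oh }.

Definition is_rhom (F : fieldType) (Q : quiver) (P I : rep F Q) (X Y : robj P I)
  (g : homfam (oV X) (oV Y)) : Prop :=
  [/\ is_hom g, heq (hcomp (of_ X) g) (of_ Y) & heq (hcomp g (oh Y)) (oh X)].

Definition r_mono (F : fieldType) (Q : quiver) (P I : rep F Q) (X Y : robj P I)
  (g : homfam (oV X) (oV Y)) : Prop :=
  is_rhom g /\
  forall (Z : robj P I) (u v : homfam (oV Z) (oV X)), is_rhom u -> is_rhom v ->
    heq (hcomp u g) (hcomp v g) -> heq u v.

Definition r_epi (F : fieldType) (Q : quiver) (P I : rep F Q) (X Y : robj P I)
  (g : homfam (oV X) (oV Y)) : Prop :=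
  is_rhom g /\
  forall (Z : robj P I) (u v : homfam (oV Y) (oV Z)), is_rhom u -> is_rhom v ->
    heq (hcomp g u) (hcomp g v) -> heq u v.

Definition r_iso (F : fieldType) (Q : quiver) (P I : rep F Q) (X Y : robj P I)
  (g : homfam (oV X) (oV Y)) : Prop :=
  is_rhom g /\
  exists g' : homfam (oV Y) (oV X),
    [/\ is_rhom g', heq (hcomp g g') (hid (oV X)) & heq (hcomp g' g) (hid (oV Y))].

Definition r_simple (F : fieldType) (Q : quiver) (P I : rep F Q) (X : robj P I) : Prop :=
  (forall (Y : robj P I) (g : homfam (oV Y) (oV X)), r_mono g -> r_iso g) /\
  (forall (Y : robj P I) (g : homfam (oV X) (oV Y)), r_epi g -> r_iso g).

Definition hsurj (F : fieldType) (Q : quiver) (V W : rep F Q) (g : homfam V W) : Prop :=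
  forall (i : vert Q) (y : 'rV[F]_(rdim W i)), exists x : 'rV[F]_(rdim V i), x *m g i = y.

Definition hinj (F : fieldType) (Q : quiver) (V W : rep F Q) (g : homfam V W) : Prop :=
  forall (i : vert Q) (x y : 'rV[F]_(rdim V i)), x *m g i = y *m g i -> x = y.

(* Main.v *)
Require Import Defs.
From HB Require Import structures.
From mathcomp Require Import all_boot all_order all_algebra.
From mathcomp Require Import reals complex.
Set Implicit Arguments. Unset Strict Implicit. Unset Printing Implicit Defensive.
Import GRing.Theory.
Local Open Scope ring_scope.
HB.lock Definition qmx (F : fieldType) m n (A : 'M[F]_(m,n)) := cokermx A *m row_ebase A.

Lemma qmx_id (F : fieldType) m n (A : 'M[F]_(m,n)) : qmx A *m qmx A = qmx A.
Proof.
rewrite qmx.unlock /cokermx -!mulmxA; congr (_ *m _).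
rewrite (mulmxA (row_ebase A)) mulmxV ?row_ebase_unit // mul1mx.
by rewrite mulmxA copid_mx_id // rank_leq_col.
Qed.

Lemma qmx0 (F : fieldType) p m n (A : 'M[F]_(m,n)) (B : 'M_(p,n)) :
  (B *m qmx A == 0) = (B <= A)%MS.
Proof.
rewrite submxE qmx.unlock mulmxA; apply/eqP/eqP => [H|->]; last by rewrite mul0mx.
by rewrite -(mulmx1 (B *m _)) -(mulmxV (row_ebase_unit A)) mulmxA H mul0mx.
Qed.

Lemma qmx_sub (F : fieldType) m n (A : 'M[F]_(m,n)) : (1%:M - qmx A <= A)%MS.
Proof. by rewrite -qmx0 mulmxBl mul1mx qmx_id subrr. Qed.

Lemma rinj_cancel (F : fieldType) m n (g : 'M[F]_(m,n)) :
  (forall x y : 'rV_m, x *m g = y *m g -> x = y) ->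
  forall p (A B : 'M_(p,m)), A *m g = B *m g -> A = B.
Proof. move=> Hg p A B E; apply/row_matrixP => i; apply: Hg; by rewrite -!row_mul E. Qed.

Lemma rsurj_inv (F : fieldType) m n (g : 'M[F]_(m,n)) :
  (forall y : 'rV_n, exists x, x *m g = y) -> pinvmx g *m g = 1%:M.
Proof.
move=> Hg; have: (1%:M <= g)%MS.
  by apply/row_subP => i; have [x <-] := Hg (row i 1%:M); exact: submxMl.
by move/mulmxKpV; rewrite mul1mx.
Qed.

Lemma inj_mono (F : fieldType) (Q : quiver) (P I : rep F Q) (X Y : robj P I)
  (g : homfam (oV X) (oV Y)) : is_rhom g -> hinj g -> r_mono g.
Proof. by move=> Hg Hi; split=> // Z u v _ _ E i; apply: (rinj_cancel (Hi i)); exact: E. Qed.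

Lemma surj_epi (F : fieldType) (Q : quiver) (P I : rep F Q) (X Y : robj P I)
  (g : homfam (oV X) (oV Y)) : is_rhom g -> hsurj g -> r_epi g.
Proof.
move=> Hg Hs; split=> // Z u v _ _ E i.
have Ei : g i *m u i = g i *m v i := E i.
by rewrite -(mul1mx (u i)) -(rsurj_inv (Hs i)) -mulmxA Ei mulmxA (rsurj_inv (Hs i)) mul1mx.
Qed.

Lemma bij_iso (F : fieldType) (Q : quiver) (P I : rep F Q) (X Y : robj P I)
  (g : homfam (oV X) (oV Y)) : is_rhom g -> hinj g -> hsurj g -> r_iso g.
Proof.
move=> Hg Hi Hs; split=> //.
have K1 i : pinvmx (g i) *m g i = 1%:M by exact: rsurj_inv.
have K2 i : g i *m pinvmx (g i) = 1%:M.
  by apply: (rinj_cancel (Hi i)); rewrite -mulmxA K1 mulmx1 mul1mx.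
case: Hg => Hh Hf Hhh.
exists (fun i => pinvmx (g i)); split => //; split.
- move=> a; apply: (rinj_cancel (Hi (tgt a))).
  rewrite -mulmxA K1 mulmx1 -mulmxA Hh mulmxA K1 mul1mx //.
- by move=> i; rewrite /hcomp -(Hf i) /hcomp -mulmxA K2 mulmx1.
- by move=> i; rewrite /hcomp -(Hhh i) /hcomp mulmxA K1 mul1mx.
Qed.

Definition stable (F : fieldType) (Q : quiver) (V : rep F Q) (m : vert Q -> nat)
  (S : forall i, 'M[F]_(m i, rdim V i)) :=
  forall a, (S (src a) *m rmap V a <= S (tgt a))%MS.

Definition subrep (F : fieldType) (Q : quiver) (V : rep F Q) (m : vert Q -> nat)
  (S : forall i, 'M[F]_(m i, rdim V i)) : rep F Q :=
  @Rep F Q (fun i => \rank (S i))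
    (fun a => row_base (S (src a)) *m rmap V a *m pinvmx (row_base (S (tgt a)))).

Definition sincl (F : fieldType) (Q : quiver) (V : rep F Q) (m : vert Q -> nat)
  (S : forall i, 'M[F]_(m i, rdim V i)) : homfam (subrep S) V :=
  fun i => row_base (S i).

Lemma baseK (F : fieldType) p m n (S : 'M[F]_(m,n)) (A : 'M_(p,n)) :
  (A <= S)%MS -> A *m pinvmx (row_base S) *m row_base S = A.
Proof. by move=> H; apply: mulmxKpV; rewrite eq_row_base. Qed.

Lemma base_cancel (F : fieldType) p m n (S : 'M[F]_(m,n)) (A B : 'M_(p,\rank S)) :
  A *m row_base S = B *m row_base S -> A = B.
Proof. exact: (row_free_inj (row_base_free S)). Qed.

Lemma sincl_hom (F : fieldType) (Q : quiver) (V : rep F Q) (m : vert Q -> nat)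
  (S : forall i, 'M[F]_(m i, rdim V i)) : stable S -> is_hom (sincl S).
Proof.
move=> HS a; rewrite /sincl /=; apply: baseK.
apply: submx_trans (HS a); apply: submxMr; rewrite eq_row_base; exact: submx_refl.
Qed.

Lemma sincl_inj (F : fieldType) (Q : quiver) (V : rep F Q) (m : vert Q -> nat)
  (S : forall i, 'M[F]_(m i, rdim V i)) : hinj (sincl S).
Proof. by move=> i x y; apply: base_cancel. Qed.

Lemma hom_comp (F : fieldType) (Q : quiver) (U V W : rep F Q) (g : homfam U V) (h : homfam V W) :
  is_hom g -> is_hom h -> is_hom (hcomp g h).
Proof. by move=> Hg Hh a; rewrite /hcomp mulmxA Hg -!mulmxA Hh. Qed.

Lemma corestr_hom (F : fieldType) (Q : quiver) (W V : rep F Q) (m : vert Q -> nat)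
  (S : forall i, 'M[F]_(m i, rdim V i)) (p : homfam W V) :
  stable S -> is_hom p -> (forall i, (p i <= S i)%MS) ->
  is_hom (fun i => p i *m pinvmx (row_base (S i)) : 'M_(rdim W i, rdim (subrep S) i)).
Proof.
move=> HS Hp Hin a; apply: base_cancel.
have E := sincl_hom HS a; rewrite /sincl in E.
rewrite -[LHS]mulmxA baseK // -[RHS]mulmxA E mulmxA baseK //.
Qed.

Lemma partA (F : fieldType) (Q : quiver) (P I : rep F Q) (X : robj P I) :
  r_simple X -> hsurj (of_ X).
Proof.
case=> Hm _.
pose S := fun i => of_ X i.
have HS : stable S.
  by move=> a; rewrite /S -(of_hom X a); exact: submxMl.
pose fY := fun i => of_ X i *m pinvmx (row_base (S i)) : 'M_(rdim P i, rdim (subrep S) i).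
have HfY : is_hom fY.
  by apply: (corestr_hom HS (of_hom X)) => i; exact: submx_refl.
pose hY := hcomp (sincl S) (oh X).
have HhY : is_hom hY by apply: hom_comp; [exact: sincl_hom | exact: oh_hom].
pose Y := RObj HfY HhY.
have Hg : is_rhom (sincl S : homfam (oV Y) (oV X)).
  split; first exact: sincl_hom.
  - by move=> i; rewrite /hcomp /fY /sincl baseK //; exact: submx_refl.
  - by [].
have [_ [g' [_ _ E]]] := Hm Y _ (inj_mono Hg (@sincl_inj _ _ _ _ S)).
move=> i y.
have Ei : g' i *m row_base (S i) = 1%:M := E i.
exists (y *m g' i *m row_base (S i) *m pinvmx (of_ X i)).
rewrite mulmxKpV; first by rewrite -mulmxA Ei mulmx1.
apply: submx_trans (submxMl _ _) _; rewrite eq_row_base; exact: submx_refl.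
Qed.

Lemma partB (F : fieldType) (Q : quiver) (P I : rep F Q) (X : robj P I) :
  r_simple X -> hinj (oh X).
Proof.
case=> _ He.
have HS : stable (oh X).
  by move=> a; rewrite -(oh_hom X a); exact: submxMl.
pose g := fun i => oh X i *m pinvmx (row_base ((oh X) i)) : 'M_(rdim (oV X) i, rdim (subrep (oh X)) i).
have Hgh : is_hom g.
  by apply: (corestr_hom HS (oh_hom X)) => i; exact: submx_refl.
have HfY : is_hom (hcomp (of_ X) g) by apply: hom_comp => //; exact: of_hom.
pose Y := RObj HfY (sincl_hom HS).
have gK i : g i *m row_base ((oh X) i) = oh X i by rewrite baseK //; exact: submx_refl.
have Hg : is_rhom (g : homfam (oV X) (oV Y)) by split.
have Hs : hsurj (g : homfam (oV X) (oV Y)).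
  move=> i y; exists (y *m row_base ((oh X) i) *m pinvmx (oh X i)).
  apply: base_cancel. rewrite -[LHS]mulmxA. rewrite (gK i) mulmxKpV //.
  apply: submx_trans (submxMl _ _) _; rewrite eq_row_base; exact: submx_refl.
have [_ [g' [_ E _]]] := He Y _ (surj_epi Hg Hs).
move=> i x y Exy.
have Ei : g i *m g' i = 1%:M := E i.
have : x *m g i = y *m g i.
  by apply: base_cancel; rewrite -[LHS]mulmxA -[RHS]mulmxA !gK.
move=> H; have : x *m g i *m g' i = y *m g i *m g' i by rewrite H.
by rewrite -[LHS]mulmxA -[RHS]mulmxA Ei !mulmx1.
Qed.

Definition dsum (F : fieldType) (Q : quiver) (V W : rep F Q) : rep F Q :=
  @Rep F Q (fun i => (rdim V i + rdim W i)%N)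
    (fun a => block_mx (rmap V a) 0 0 (rmap W a)).

Lemma dsf_hom (F : fieldType) (Q : quiver) (P I : rep F Q) (Y : robj P I) (W : rep F Q) :
  is_hom (fun i => row_mx (of_ Y i) 0 : 'M_(rdim P i, rdim (dsum (oV Y) W) i)).
Proof.
move=> a /=; rewrite mul_mx_row mul_row_block !mulmx0 !mul0mx addr0 add0r.
by rewrite (of_hom Y a).
Qed.

Lemma dsh_hom (F : fieldType) (Q : quiver) (P I : rep F Q) (Y : robj P I) (W : rep F Q) :
  is_hom (fun i => col_mx (oh Y i) 0 : 'M_(rdim (dsum (oV Y) W) i, rdim I i)).
Proof.
move=> a /=; rewrite mul_block_col mul_col_mx !mulmx0 !mul0mx addr0 add0r.
by rewrite (oh_hom Y a).
Qed.

Definition dsobj (F : fieldType) (Q : quiver) (P I : rep F Q) (Y : robj P I) (W : rep F Q) : robj P I :=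
  RObj (@dsf_hom F Q P I Y W) (@dsh_hom F Q P I Y W).

Lemma partC (F : fieldType) (Q : quiver) (P I : rep F Q) (X : robj P I) :
  hsurj (of_ X) -> hinj (oh X) ->
  forall (Y : robj P I) (g : homfam (oV Y) (oV X)), r_mono g -> r_iso g.
Proof.
move=> Hf Hh Y g [Hg Hm]; apply: bij_iso => //; last first.
  move=> i y; have [x <-] := Hf i y; exists (x *m of_ Y i).
  by case: Hg => _ E _; rewrite -mulmxA; congr (_ *m _); exact: (E i).
case: Hg => Hgh Ef Eh.
pose K := fun i => kermx (g i).
have HK : stable K.
  move=> a; rewrite /K sub_kermx -mulmxA Hgh mulmxA mulmx_ker mul0mx //.
pose Z := dsobj Y (subrep K).
pose u := fun i => col_mx 1%:M 0 : 'M[F]_(rdim (oV Z) i, rdim (oV Y) i).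
pose v := fun i => col_mx 1%:M (sincl K i) : 'M_(rdim (oV Z) i, rdim (oV Y) i).
have Bg i : sincl K i *m g i = 0.
  apply/eqP; rewrite -sub_kermx /sincl eq_row_base; exact: submx_refl.
have Hu : is_rhom u.
  split.
  - move=> a; rewrite /u /v /Z /=; rewrite mul_block_col mul_col_mx ?mulmx0 ?mul0mx ?mulmx1 ?mul1mx ?addr0 ?add0r.
    by [].
  - by move=> i; rewrite /hcomp /u /= mul_row_col mulmx1 mul0mx addr0.
  - by move=> i; rewrite /hcomp /u /= mul_col_mx mul1mx mul0mx.
have Hv : is_rhom v.
  split.
  - move=> a; rewrite /u /v /Z /=; rewrite mul_block_col mul_col_mx ?mulmx0 ?mul0mx ?mulmx1 ?mul1mx ?addr0 ?add0r.
    by rewrite (sincl_hom HK a).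
  - by move=> i; rewrite /hcomp /v /= mul_row_col mulmx1 mul0mx addr0.
  - move=> i; rewrite /hcomp /v /= mul_col_mx mul1mx.
    have -> : sincl K i *m oh Y i = 0 by rewrite -(Eh i) /hcomp mulmxA Bg mul0mx.
    by [].
have Euv : heq u v.
  apply: (Hm Z u v Hu Hv) => i.
  by rewrite /hcomp /u /v !mul_col_mx Bg mul0mx.
move=> i x y Exy.
have B0 : sincl K i = 0 by have := Euv i; rewrite /u /v => /eq_col_mx [_ <-].
apply/eqP; rewrite -subr_eq0; apply/eqP.
have Hk : (x - y <= K i)%MS by rewrite sub_kermx mulmxBl Exy subrr.
by rewrite -(baseK Hk); have := B0; rewrite /sincl => ->; rewrite mulmx0.
Qed.

Definition quot (F : fieldType) (Q : quiver) (V : rep F Q) (m : vert Q -> nat)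
  (S : forall i, 'M[F]_(m i, rdim V i)) : rep F Q :=
  @Rep F Q (rdim V) (fun a => qmx (S (src a)) *m rmap V a *m qmx (S (tgt a))).

Lemma qproj_hom (F : fieldType) (Q : quiver) (V : rep F Q) (m : vert Q -> nat)
  (S : forall i, 'M[F]_(m i, rdim V i)) :
  stable S -> is_hom ((fun i => qmx (S i)) : homfam V (quot S)).
Proof.
move=> HS a /=; rewrite !mulmxA qmx_id.
apply/eqP; rewrite -subr_eq0 -mulmxBl -{1}(mul1mx (rmap V a)) -mulmxBl.
rewrite qmx0; apply: submx_trans (HS a); apply: submxMr; exact: qmx_sub.
Qed.

Lemma partD (F : fieldType) (Q : quiver) (P I : rep F Q) (X : robj P I) :
  hsurj (of_ X) -> hinj (oh X) ->
  forall (Y : robj P I) (g : homfam (oV X) (oV Y)), r_epi g -> r_iso g.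
Proof.
move=> Hf Hh Y g [Hg He]; apply: bij_iso => //.
  move=> i x y Exy; apply: Hh; case: Hg => _ _ E.
  have Ei : g i *m oh Y i = oh X i := E i.
  by rewrite -Ei !mulmxA Exy.
case: Hg => Hgh Ef Eh.
pose S := fun i => g i.
have HS : stable S by move=> a; rewrite /S -Hgh; exact: submxMl.
pose Z := dsobj Y (quot S).
pose u := fun i => row_mx 1%:M 0 : 'M[F]_(rdim (oV Y) i, rdim (oV Z) i).
pose v := fun i => row_mx 1%:M (qmx (S i)) : 'M[F]_(rdim (oV Y) i, rdim (oV Z) i).
have gq i : g i *m qmx (S i) = 0 by apply/eqP; rewrite qmx0; exact: submx_refl.
have Hu : is_rhom u.
  split.
  - move=> a; rewrite /u /Z /= mul_row_block mul_mx_row ?mulmx0 ?mul0mx ?mulmx1 ?mul1mx ?addr0 ?add0r.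
    by [].
  - by move=> i; rewrite /hcomp /u /= mul_mx_row mulmx1 mulmx0.
  - by move=> i; rewrite /hcomp /u /= mul_row_col mul1mx mul0mx addr0.
have Hv : is_rhom v.
  split.
  - move=> a; rewrite /v /Z /= mul_row_block mul_mx_row ?mulmx0 ?mul0mx ?mulmx1 ?mul1mx ?addr0 ?add0r.
    by rewrite (qproj_hom HS a).
  - move=> i; rewrite /hcomp /v /= mul_mx_row mulmx1.
    by rewrite -(Ef i) /hcomp -mulmxA gq mulmx0.
  - by move=> i; rewrite /hcomp /v /= mul_row_col mul1mx mulmx0 addr0.
have Euv : heq u v.
  apply: (He Z u v Hu Hv) => i.
  by rewrite /hcomp /u /v !mul_mx_row gq mulmx0.
move=> i y.
have q0 : qmx (S i) = 0 by have := Euv i; rewrite /u /v => /eq_row_mx [_ <-].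
exists (y *m pinvmx (g i)); apply: mulmxKpV.
by rewrite -qmx0 q0 mulmx0.
Qed.

Theorem mainTheorem13 (R : realType) (Q : quiver) (hQ : acyclic Q)
  (P I : rep (complex R) Q) (hP : rep_projective P) (hI : rep_injective I)
  (X : robj P I) :
  r_simple X <-> hsurj (of_ X) /\ hinj (oh X).
Proof.
split.
- by move=> H; split; [exact: partA | exact: partB].
- by case=> Hf Hh; split; [exact: partC | exact: partD].
Qed.
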